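(* Let $\alpha=\exp\left(\frac{2\pi i}{5}\right)$, let $c,x\in\mathbb{C}$, and let $(a_1,A_1),\dots,(a_p,A_p)$ and $(b_1,B_1),\dots,(b_q,B_q)$ be parameter pairs ($a_j,b_j\in\mathbb{C}$, $A_j,B_j$ nonzero reals) such that all Pochhammer symbols involved are well defined and all series involved converge. Then $$\sum_{k=0}^{4}{}_p\Psi^{*}_q\left[\begin{array}{c}(a_1,A_1),\dots,(a_p,A_p);\\(b_1,B_1),\dots,(b_q,B_q);\end{array} c(x\alpha^k)^2\right] =5\,{}_p\Psi^{*}_{q+4}\left[\begin{array}{c}(a_1,5A_1),\dots,(a_p,5A_p);\\ \left(\tfrac15,1\right),\left(\tfrac25,1\right),\left(\tfrac35,1\right),\left(\tfrac45,1\right),(b_1,5B_1),\dots,(b_q,5B_q);\end{array}\left(\frac{cx^2}{5}\right)^5\right].$$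
   Context: For $\lambda,\nu\in\mathbb{C}$ the Pochhammer symbol is $(\lambda)_\nu=\Gamma(\lambda+\nu)/\Gamma(\lambda)$ (with $(\lambda)_0=1$). The normalized Fox–Wright function is $${}_p\Psi^{*}_q\left[\begin{array}{c}(\alpha_1,A_1),\dots,(\alpha_p,A_p);\\(\beta_1,B_1),\dots,(\beta_q,B_q);\end{array}z\right]=\sum_{n=0}^{\infty}\frac{(\alpha_1)_{nA_1}\cdots(\alpha_p)_{nA_p}}{(\beta_1)_{nB_1}\cdots(\beta_q)_{nB_q}}\frac{z^n}{n!},$$ where $\alpha_i,\beta_j\in\mathbb{C}$ and $A_i,B_j$ are nonzero reals. Values of parameters and variables for which the expressions do not make sense are excluded. *)

(* Defs.v *)
From Stdlib Require Import Reals List Factorial.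
From Coquelicot Require Import Coquelicot.
Import ListNotations.
Open Scope R_scope.

Definition cexp (z : C) : C :=
  (exp (fst z) * cos (snd z), exp (fst z) * sin (snd z)).

Fixpoint cpow (z : C) (n : nat) : C :=
  match n with
  | O => 1%C
  | S m => (z * cpow z m)%C
  end.

Fixpoint shifted_prod (z : C) (n : nat) : C :=
  match n with
  | O => z
  | S m => (shifted_prod z m * (z + RtoC (INR (S m))))%C
  end.

Definition Gamma_seq (z : C) (n : nat) : C :=
  (RtoC (INR (fact n)) * cexp (z * RtoC (ln (INR n))) / shifted_prod z n)%C.

(** The complex Gamma function, defined (for z not a non-positive integer)
    by the Euler--Gauss limit  Gamma z = lim_n n! n^z / (z(z+1)...(z+n)). *)
Definition Gamma (z : C) : C :=
  iota (fun g : C_CompleteNormedModule =>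
          filterlim (Gamma_seq z) eventually (locally g)).

Definition Gamma_pole (z : C) : Prop := exists m : nat, z = RtoC (- INR m).

Definition pochhammer (l : C) (nu : R) : C :=
  if Req_EM_T nu 0 then 1%C else (Gamma (l + RtoC nu) / Gamma l)%C.

Definition pochhammer_ok (l : C) (nu : R) : Prop :=
  nu = 0 \/ (~ Gamma_pole l /\ ~ Gamma_pole (l + RtoC nu)%C).

Definition poch_prod (ps : list (C * R)) (n : nat) : C :=
  fold_right (fun p acc => (pochhammer (fst p) (INR n * snd p) * acc)%C) 1%C ps.

Definition FW_term (ps qs : list (C * R)) (z : C) (n : nat) : C :=
  (poch_prod ps n / poch_prod qs n * cpow z n / RtoC (INR (fact n)))%C.

Definition FoxWright (ps qs : list (C * R)) (z : C) : C :=
  iota (fun s : C_CompleteNormedModule => is_series (FW_term ps qs z) s).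

Definition params_ok (ps : list (C * R)) : Prop :=
  List.Forall (fun p => snd p <> 0) ps.

Definition FW_poch_ok (ps qs : list (C * R)) : Prop :=
  forall n : nat,
    List.Forall (fun p => pochhammer_ok (fst p) (INR n * snd p)) ps /\
    List.Forall (fun p => pochhammer_ok (fst p) (INR n * snd p)) qs.

Definition scale5 (ps : list (C * R)) : list (C * R) :=
  map (fun p => (fst p, 5 * snd p)) ps.

Definition alpha5 : C := cexp (0, 2 * PI / 5).

Definition sum5 (f : nat -> C) : C :=
  fold_right (fun k acc => (f k + acc)%C) 0%C (List.seq 0 5).

(* Main.v *)
Require Import Defs.
From Stdlib Require Import Reals List.
From Coquelicot Require Import Coquelicot.
Import ListNotations.
From Stdlib Require Import Lra Lia Factorial.

Section Aux.
Open Scope R_scope.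
Lemma ln_le_x1 x : 0 < x -> ln x <= x - 1.
Proof. intros Hx. pose proof (exp_ineq1_le (ln x)). rewrite exp_ln in H; lra. Qed.

Lemma exp_conv l x y : 0 <= l <= 1 ->
  exp (l * x + (1 - l) * y) <= l * exp x + (1 - l) * exp y.
Proof.
  intros Hl. set (m := l * x + (1 - l) * y).
  assert (Hx : exp x = exp m * exp (x - m)) by (rewrite <- exp_plus; f_equal; ring).
  assert (Hy : exp y = exp m * exp (y - m)) by (rewrite <- exp_plus; f_equal; ring).
  pose proof (exp_ineq1_le (x - m)). pose proof (exp_ineq1_le (y - m)).
  pose proof (exp_pos m).
  rewrite Hx, Hy.
  assert (l * (exp m * exp (x - m)) >= l * (exp m * (1 + (x - m)))).
  { apply Rle_ge, Rmult_le_compat_l; [lra|]. apply Rmult_le_compat_l; lra. }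
  assert ((1 - l) * (exp m * exp (y - m)) >= (1 - l) * (exp m * (1 + (y - m)))).
  { apply Rle_ge, Rmult_le_compat_l; [lra|]. apply Rmult_le_compat_l; lra. }
  assert (l * (exp m * (1 + (x - m))) + (1 - l) * (exp m * (1 + (y - m))) = exp m)
    by (unfold m; ring).
  lra.
Qed.

Fixpoint rsp (a : R) (n : nat) : R :=
  match n with
  | O => a
  | S m => rsp a m * (a + INR (S m))
  end.

Lemma rsp_eq a n : rsp a (S n) = rsp a n * (a + INR (S n)).
Proof. reflexivity. Qed.

Lemma rsp_pos a n : 0 < a -> 0 < rsp a n.
Proof.
  intros Ha; induction n; auto. rewrite rsp_eq.
  apply Rmult_lt_0_compat; auto. pose proof (pos_INR (S n)); lra.
Qed.

Lemma rsp_S a n : rsp a (S n) = a * rsp (a + 1) n.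
Proof.
  induction n.
  - simpl. ring.
  - change (rsp a (S (S n))) with (rsp a (S n) * (a + INR (S (S n)))).
    change (rsp (a+1) (S n)) with (rsp (a+1) n * (a + 1 + INR (S n))).
    rewrite IHn. rewrite (S_INR (S n)). ring.
Qed.

Definition Gr (a : R) (n : nat) : R :=
  INR (fact n) * exp (a * ln (INR n)) / rsp a n.

Definition sG (a : R) (n : nat) : R :=
  INR (fact n) * exp (a * ln (INR (S n))) / rsp a n.

Lemma INR_S_pos n : 0 < INR (S n).
Proof. apply lt_0_INR; lia. Qed.

Lemma Gr_S a n : 0 < a -> Gr a (S n) =
  Gr a n * (INR (S n) * exp (a * ln (INR (S n)))) / (exp (a * ln (INR n)) * (a + INR (S n))).
Proof.
  intros Ha. unfold Gr. rewrite rsp_eq. rewrite fact_simpl, mult_INR.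
  pose proof (rsp_pos a n Ha). pose proof (exp_pos (a * ln (INR n))).
  pose proof (INR_S_pos n).
  field. repeat split; lra.
Qed.

Lemma sG_S a n : 0 < a -> sG a (S n) =
  sG a n * (INR (S n) * exp (a * ln (INR (S (S n))))) / (exp (a * ln (INR (S n))) * (a + INR (S n))).
Proof.
  intros Ha. unfold sG. rewrite rsp_eq. rewrite fact_simpl, mult_INR.
  pose proof (rsp_pos a n Ha). pose proof (exp_pos (a * ln (INR (S n)))).
  pose proof (INR_S_pos n).
  field. repeat split; lra.
Qed.

Lemma Gr_pos a n : 0 < a -> 0 < Gr a n.
Proof.
  intros Ha. unfold Gr. pose proof (rsp_pos a n Ha). pose proof (exp_pos (a * ln (INR n))).
  pose proof (lt_0_INR _ (lt_O_fact n)).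
  apply Rdiv_lt_0_compat; auto. apply Rmult_lt_0_compat; auto.
Qed.

Lemma incr_ineq a n : 0 < a -> (1 <= n)%nat ->
  exp (a * ln (INR n)) * (a + INR (S n)) <= INR (S n) * exp (a * ln (INR (S n))).
Proof.
  intros Ha Hn.
  assert (Hn0 : 0 < INR n) by (apply lt_0_INR; lia).
  pose proof (INR_S_pos n) as HS.
  set (d := ln (INR (S n)) - ln (INR n)).
  assert (E : exp (a * ln (INR (S n))) = exp (a * ln (INR n)) * exp (a * d))
    by (rewrite <- exp_plus; f_equal; unfold d; ring).
  rewrite E.
  assert (Hd : 1 / INR (S n) <= d).
  { unfold d. rewrite <- ln_div by lra. 
    pose proof (ln_le_x1 (INR n / INR (S n)) ltac:(apply Rdiv_lt_0_compat; lra)).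
    rewrite ln_div in H by lra. rewrite ln_div by lra.
    assert (INR n / INR (S n) - 1 = - (1 / INR (S n))).
    { rewrite S_INR in *. field. lra. }
    lra. }
  pose proof (exp_ineq1_le (a * d)). pose proof (exp_pos (a * ln (INR n))).
  assert (INR (S n) * d >= 1).
  { apply Rle_ge. apply Rmult_le_compat_l with (r := INR (S n)) in Hd; [|lra].
    replace (INR (S n) * (1 / INR (S n))) with 1 in Hd by (field; lra). lra. }
  assert (a + INR (S n) <= INR (S n) * exp (a * d)).
  { apply Rle_trans with (INR (S n) * (1 + a * d)).
    - assert (a * (INR (S n) * d) >= a * 1) by (apply Rle_ge, Rmult_le_compat_l; lra). nra.
    - apply Rmult_le_compat_l; lra. }
  nra.
Qed.

Lemma decr_ineq a n : 0 < a <= 1 ->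
  INR (S n) * exp (a * ln (INR (S (S n)))) <= exp (a * ln (INR (S n))) * (a + INR (S n)).
Proof.
  intros Ha.
  pose proof (INR_S_pos n) as HS. pose proof (INR_S_pos (S n)) as HSS.
  set (L := ln (INR (S (S n))) - ln (INR (S n))).
  assert (E : exp (a * ln (INR (S (S n)))) = exp (a * ln (INR (S n))) * exp (a * L + (1 - a) * 0))
    by (rewrite <- exp_plus; f_equal; unfold L; ring).
  rewrite E.
  pose proof (exp_conv a L 0 ltac:(lra)). rewrite exp_0 in H.
  assert (EL : exp L = INR (S (S n)) / INR (S n)).
  { unfold L. rewrite <- ln_div by lra. apply exp_ln. apply Rdiv_lt_0_compat; lra. }
  rewrite EL in H.
  assert (INR (S n) * (a * (INR (S (S n)) / INR (S n)) + (1 - a) * 1) = a + INR (S n)).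
  { rewrite (S_INR (S n)). field. lra. }
  pose proof (exp_pos (a * ln (INR (S n)))).
  assert (INR (S n) * exp (a * L + (1 - a) * 0) <= a + INR (S n)).
  { rewrite <- H0. apply Rmult_le_compat_l; lra. }
  nra.
Qed.

Lemma sG_bound a n : 0 < a <= 1 -> sG a n <= 1 / a.
Proof.
  intros Ha. induction n.
  - unfold sG. simpl. rewrite ln_1, Rmult_0_r, exp_0. lra.
  - rewrite sG_S by lra.
    pose proof (decr_ineq a n Ha).
    assert (0 < sG a n).
    { unfold sG. pose proof (rsp_pos a n ltac:(lra)). pose proof (exp_pos (a * ln (INR (S n)))).
      pose proof (lt_0_INR _ (lt_O_fact n)).
      apply Rdiv_lt_0_compat; auto. apply Rmult_lt_0_compat; auto. }
    pose proof (exp_pos (a * ln (INR (S n)))). pose proof (INR_S_pos n).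
    apply Rle_trans with (sG a n); auto.
    unfold Rdiv. rewrite Rmult_assoc.
    rewrite <- (Rmult_1_r (sG a n)) at 2. apply Rmult_le_compat_l; [lra|].
    apply (Rmult_le_reg_r (exp (a * ln (INR (S n))) * (a + INR (S n)))).
    { apply Rmult_lt_0_compat; lra. }
    rewrite Rmult_assoc, Rinv_l by (apply Rgt_not_eq, Rmult_lt_0_compat; lra). lra.
Qed.

Lemma exp_le' x y : x <= y -> exp x <= exp y.
Proof. intros [H|H]. left; apply exp_increasing; auto. subst; lra. Qed.

Lemma Gr_le_sG a n : 0 < a -> Gr a (S n) <= sG a (S n).
Proof.
  intros Ha. unfold Gr, sG. unfold Rdiv. apply Rmult_le_compat_r.
  { left. apply Rinv_0_lt_compat, rsp_pos; auto. }
  apply Rmult_le_compat_l. { apply pos_INR. }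
  apply exp_le'. apply Rmult_le_compat_l; [lra|].
  apply ln_le. apply INR_S_pos. apply le_INR. lia.
Qed.

Lemma Gr_exists a : 0 < a <= 1 -> exists L, 0 < L /\ is_lim_seq (Gr a) L.
Proof.
  intros Ha.
  set (u := fun n => Gr a (S n)).
  assert (Hg : Un_growing u).
  { intros n. unfold u. rewrite (Gr_S a (S n)) by lra.
    pose proof (incr_ineq a (S n) ltac:(lra) ltac:(lia)).
    pose proof (Gr_pos a (S n) ltac:(lra)).
    pose proof (exp_pos (a * ln (INR (S n)))). pose proof (INR_S_pos (S n)).
    unfold Rdiv. rewrite Rmult_assoc.
    rewrite <- (Rmult_1_r (Gr a (S n))) at 1. apply Rmult_le_compat_l; [lra|].
    apply (Rmult_le_reg_r (exp (a * ln (INR (S n))) * (a + INR (S (S n))))).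
    { apply Rmult_lt_0_compat; lra. }
    rewrite Rmult_assoc, Rinv_l by (apply Rgt_not_eq, Rmult_lt_0_compat; lra). lra. }
  assert (Hb : has_ub u).
  { exists (1 / a). intros x [n ->]. unfold u.
    eapply Rle_trans; [apply Gr_le_sG; lra | apply sG_bound; auto]. }
  destruct (growing_cv u Hg Hb) as [L HL].
  exists L. split.
  - pose proof (growing_ineq u L Hg HL 0). pose proof (Gr_pos a 1 ltac:(lra)). unfold u in H. lra.
  - apply is_lim_seq_incr_1. apply is_lim_seq_Reals. exact HL.
Qed.

Lemma inv_lim c : 0 < c -> is_lim_seq (fun n => / (INR n + c)) 0.
Proof.
  intros Hc.
  assert (H : is_lim_seq (fun n => INR n + c) p_infty).
  { eapply is_lim_seq_plus. apply is_lim_seq_INR. apply is_lim_seq_const. reflexivity. }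
  apply is_lim_seq_inv in H; [|discriminate]. simpl in H. exact H.
Qed.

Lemma v_lim a : 0 < a -> is_lim_seq (fun n => a * INR n / (a + INR n + 1)) a.
Proof.
  intros Ha.
  apply is_lim_seq_ext with (fun n => a + (- (a * (a + 1))) * / (INR n + (a + 1))).
  { intros n. pose proof (pos_INR n). field. lra. }
  assert (H : is_lim_seq (fun n => a + (- (a * (a + 1))) * / (INR n + (a + 1))) (a + (- (a * (a+1))) * 0)).
  { apply is_lim_seq_plus'. apply is_lim_seq_const.
    apply is_lim_seq_mult'. apply is_lim_seq_const. apply inv_lim. lra. }
  replace (a + (- (a * (a+1))) * 0) with a in H by ring. exact H.
Qed.

Lemma Gr_step a (L : R) : 0 < a -> is_lim_seq (Gr a) L -> is_lim_seq (Gr (a + 1)) (a * L).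
Proof.
  intros Ha HL.
  apply is_lim_seq_ext_loc with (fun n => Gr a n * (a * INR n / (a + INR n + 1))).
  { exists 1%nat. intros n Hn.
    assert (Hn0 : 0 < INR n) by (apply lt_0_INR; lia).
    unfold Gr.
    assert (E : exp ((a + 1) * ln (INR n)) = exp (a * ln (INR n)) * INR n).
    { rewrite <- (exp_ln (INR n)) at 3 by lra. rewrite <- exp_plus. f_equal. ring. }
    rewrite E.
    assert (Er : rsp (a + 1) n = rsp a n * (a + INR (S n)) / a).
    { rewrite <- rsp_eq, rsp_S. field. lra. }
    rewrite Er. rewrite S_INR.
    pose proof (rsp_pos a n Ha).
    field. repeat split; lra. }
  rewrite Rmult_comm. apply is_lim_seq_mult'; auto. apply v_lim; auto.
Qed.

Lemma lift (u : nat -> R) (l : R) : is_lim_seq u l ->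
  filterlim (fun n => RtoC (u n)) eventually (locally (RtoC l)).
Proof.
  intros H. apply filterlim_locally. intros eps.
  apply is_lim_seq_spec in H. destruct (H eps) as [N HN].
  exists N. intros n Hn. specialize (HN n Hn). split; simpl.
  - exact HN.
  - apply ball_center.
Qed.

Lemma sp_R a n : shifted_prod (RtoC a) n = RtoC (rsp a n).
Proof.
  induction n.
  - reflexivity.
  - change (shifted_prod (RtoC a) (S n)) with (shifted_prod (RtoC a) n * (RtoC a + RtoC (INR (S n))))%C.
    rewrite IHn, rsp_eq, <- RtoC_plus, <- RtoC_mult. reflexivity.
Qed.

Lemma cexp_R r : cexp (RtoC r) = RtoC (exp r).
Proof. unfold cexp, RtoC; simpl. rewrite cos_0, sin_0. f_equal; ring. Qed.

Lemma Gamma_seq_R a n : 0 < a -> Gamma_seq (RtoC a) n = RtoC (Gr a n).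
Proof.
  intros Ha. unfold Gamma_seq, Gr.
  rewrite <- RtoC_mult, cexp_R, sp_R, <- RtoC_mult, <- RtoC_div. reflexivity.
  apply Rgt_not_eq, rsp_pos; auto.
Qed.

Lemma Gamma_R a (L : R) : 0 < a -> is_lim_seq (Gr a) L -> Gamma (RtoC a) = RtoC L.
Proof.
  intros Ha HL. unfold Gamma. apply (@iota_filterlim_locally C_AbsRing C_CompleteNormedModule nat eventually _ (Gamma_seq (RtoC a)) (RtoC L)).
  eapply filterlim_ext; [|apply lift; exact HL].
  intros n. simpl. rewrite Gamma_seq_R; auto.
Qed.

Fixpoint rp (a : R) (m : nat) : R :=
  match m with O => 1 | S k => rp a k * (a + INR k) end.

Lemma rp_lim a : 0 < a <= 1 -> exists L, 0 < L /\ is_lim_seq (Gr a) L /\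
  forall m, is_lim_seq (Gr (a + INR m)) (rp a m * L).
Proof.
  intros Ha. destruct (Gr_exists a Ha) as [L [HL HlL]].
  exists L. split; [auto|split; [auto|]].
  induction m.
  - simpl. rewrite Rplus_0_r, Rmult_1_l. auto.
  - rewrite S_INR. replace (a + (INR m + 1)) with ((a + INR m) + 1) by ring.
    change (rp a (S m)) with (rp a m * (a + INR m)).
    replace (rp a m * (a + INR m) * L) with ((a + INR m) * (rp a m * L)) by ring.
    apply Gr_step; auto. pose proof (pos_INR m). lra.
Qed.

Lemma rp_pos a m : 0 < a -> 0 < rp a m.
Proof.
  intros Ha; induction m; simpl rp. lra.
  apply Rmult_lt_0_compat; auto. pose proof (pos_INR m); lra.
Qed.

Lemma poch_R a : 0 < a <= 1 -> forall m, pochhammer (RtoC a) (INR m * 1) = RtoC (rp a m).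
Proof.
  intros Ha m. destruct (rp_lim a Ha) as [L [HL [H0 Hm]]].
  unfold pochhammer. destruct (Req_EM_T (INR m * 1) 0) as [e|ne].
  - rewrite Rmult_1_r in e. replace m with 0%nat by (symmetry; apply INR_eq; simpl; auto).
    reflexivity.
  - rewrite <- RtoC_plus, Rmult_1_r.
    rewrite (Gamma_R (a + INR m) (rp a m * L)), (Gamma_R a L); auto.
    all: try (pose proof (pos_INR m); lra).
    rewrite <- RtoC_div by lra. f_equal. field. lra.
Qed.

Lemma fact5 m : INR (fact (5 * m)) =
  5 ^ (5 * m) * INR (fact m) * rp (1/5) m * rp (2/5) m * rp (3/5) m * rp (4/5) m.
Proof.
  induction m.
  - simpl. ring.
  - replace (5 * S m)%nat with (S (S (S (S (S (5 * m))))))%nat by lia.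
    rewrite !fact_simpl, !mult_INR, IHm.
    replace (S (S (S (S (S (5 * m))))))%nat with (5 * m + 5)%nat by lia.
    rewrite pow_add. simpl rp.
    rewrite !S_INR, !plus_INR, ?mult_INR. simpl INR. field.
Qed.
End Aux.

Section AuxC.
Open Scope C_scope.

Lemma cpow_mul a b n : cpow (a * b) n = cpow a n * cpow b n.
Proof. induction n; simpl. ring. rewrite IHn. ring. Qed.

Lemma cpow_add a n m : cpow a (n + m) = cpow a n * cpow a m.
Proof. induction n; simpl. ring. rewrite IHn. ring. Qed.

Lemma cpow_pow a n m : cpow (cpow a n) m = cpow a (n * m).
Proof.
  induction m; simpl. rewrite Nat.mul_0_r. reflexivity.
  rewrite IHm. replace (n * S m)%nat with (n + n * m)%nat by lia. rewrite cpow_add. reflexivity.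
Qed.

Lemma cpow_R r n : cpow (RtoC r) n = RtoC (r ^ n).
Proof. induction n; simpl. reflexivity. rewrite IHn, RtoC_mult. reflexivity. Qed.

Lemma cpow_alpha j : cpow alpha5 j = (cos (INR j * (2 * PI / 5)), sin (INR j * (2 * PI / 5)))%R.
Proof.
  induction j.
  - simpl. rewrite Rmult_0_l, cos_0, sin_0. reflexivity.
  - change (cpow alpha5 (S j)) with (alpha5 * cpow alpha5 j). rewrite IHj.
    unfold alpha5, cexp. simpl fst; simpl snd. rewrite exp_0, !Rmult_1_l.
    rewrite S_INR. 
    replace ((INR j + 1) * (2 * PI / 5))%R with ((2 * PI / 5) + INR j * (2 * PI / 5))%R by ring.
    rewrite cos_plus, sin_plus. unfold Cmult; simpl. f_equal; ring.
Qed.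

Lemma alpha5_5 : cpow alpha5 5 = 1.
Proof.
  rewrite cpow_alpha. replace (INR 5 * (2 * PI / 5))%R with (2 * PI)%R by (simpl; field).
  rewrite cos_2PI, sin_2PI. reflexivity.
Qed.

Lemma alpha_ne1 j : (1 <= j <= 4)%nat -> cpow alpha5 j <> 1.
Proof.
  intros Hj E. rewrite cpow_alpha in E. injection E as _ E.
  pose proof PI_RGT_0.
  assert (H1 : (INR 1 <= INR j)%R) by (apply le_INR; lia).
  assert (H4 : (INR j <= INR 4)%R) by (apply le_INR; lia). simpl in H1, H4.
  destruct (Compare_dec.le_lt_dec j 2).
  - assert (H2 : (INR j <= INR 2)%R) by (apply le_INR; lia). simpl in H2.
    assert (0 < sin (INR j * (2 * PI / 5)))%R by (apply sin_gt_0; nra). lra.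
  - assert (H3 : (INR 3 <= INR j)%R) by (apply le_INR; lia). simpl in H3.
    assert (sin (INR j * (2 * PI / 5)) < 0)%R by (apply sin_lt_0; nra). lra.
Qed.

Lemma cpow_1 n : cpow 1 n = 1.
Proof. induction n; simpl. reflexivity. rewrite IHn. ring. Qed.

Lemma cpow_mod5 m : cpow alpha5 m = cpow alpha5 (m mod 5).
Proof.
  rewrite (Nat.div_mod m 5) at 1 by lia. rewrite cpow_add, <- cpow_pow, alpha5_5.
  rewrite cpow_1. ring.
Qed.

Lemma R5 : RtoC 5 = 1+1+1+1+1.
Proof. unfold RtoC, Cplus; simpl. f_equal; ring. Qed.

Definition geo (b : C) : C := 1 + (b + (cpow b 2 + (cpow b 3 + (cpow b 4 + 0)))).

Lemma geo_val n : geo (cpow alpha5 (2 * n)) =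
  if Nat.eqb (n mod 5) 0 then RtoC 5 else 0.
Proof.
  set (b := cpow alpha5 (2 * n)).
  assert (Hb5 : cpow b 5 = 1).
  { unfold b. rewrite cpow_pow. replace (2 * n * 5)%nat with (5 * (2 * n))%nat by lia.
    rewrite <- cpow_pow, alpha5_5, cpow_1. reflexivity. }
  destruct (Nat.eqb_spec (n mod 5) 0) as [e|ne].
  - assert (Hb : b = 1).
    { unfold b. rewrite cpow_mod5. replace ((2 * n) mod 5)%nat with 0%nat. reflexivity.
      pose proof (Nat.div_mod n 5 ltac:(lia)). pose proof (Nat.div_mod (2*n) 5 ltac:(lia)).
      pose proof (Nat.mod_upper_bound (2*n) 5 ltac:(lia)). lia. }
    rewrite Hb. unfold geo. rewrite !cpow_1, R5. ring.
  - assert (Hb : b <> 1).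
    { unfold b. rewrite cpow_mod5. apply alpha_ne1.
      pose proof (Nat.div_mod n 5 ltac:(lia)). pose proof (Nat.div_mod (2*n) 5 ltac:(lia)).
      pose proof (Nat.mod_upper_bound (2*n) 5 ltac:(lia)).
      pose proof (Nat.mod_upper_bound n 5 ltac:(lia)). lia. }
    assert (E : (1 - b) * geo b = 1 - cpow b 5) by (unfold geo; simpl; ring).
    rewrite Hb5 in E.
    assert (Hnz : 1 - b <> 0).
    { intros H. apply Hb. rewrite <- (Cplus_0_l b), <- H. ring. }
    replace (geo b) with (/ (1 - b) * ((1 - b) * geo b)) by (field; auto).
    rewrite E. ring.
Qed.

Lemma Cinv0 : Cinv 0 = 0.
Proof. unfold Cinv; simpl. unfold RtoC. f_equal; unfold Rdiv; ring. Qed.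

Lemma Cinv_mul_gen (P B : C) : P <> 0 -> / (P * B) = / P * / B.
Proof.
  intros HP. destruct (Classical_Prop.classic (B = 0)) as [->|HB].
  - rewrite Cmult_0_r, Cinv0. ring.
  - field. split; auto.
Qed.

Lemma poch_app l1 l2 n : poch_prod (l1 ++ l2) n = poch_prod l1 n * poch_prod l2 n.
Proof. induction l1; simpl. ring. unfold poch_prod in *; simpl. rewrite IHl1. ring. Qed.

Lemma poch_scale5 l m : poch_prod (scale5 l) m = poch_prod l (5 * m).
Proof.
  induction l; simpl. reflexivity.
  unfold poch_prod in *; simpl. rewrite IHl. f_equal. f_equal.
  rewrite !plus_INR. simpl INR. ring.
Qed.

Lemma is_series_zero : @is_series C_AbsRing C_NormedModule (fun _ : nat => RtoC 0) (RtoC 0).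
Proof.
  unfold is_series. eapply filterlim_ext; [|apply filterlim_const].
  intros N. induction N. rewrite sum_O. reflexivity.
  rewrite sum_Sn, <- IHN. simpl. unfold plus; simpl. symmetry. apply Cplus_0_r.
Qed.

Lemma is_series_sumlist (f : nat -> nat -> C) (s : nat -> C) l :
  (forall k, In k l -> is_series (f k) (s k)) ->
  is_series (fun n => fold_right (fun k acc => f k n + acc) 0 l)
            (fold_right (fun k acc => s k + acc) 0 l).
Proof.
  induction l; intros H; simpl.
  - apply is_series_zero.
  - apply (is_series_plus (f a) _ (s a) _).
    + apply H. left; auto.
    + apply IHl. intros k Hk. apply H. right; auto.
Qed.

Lemma div5_lim : filterlim (fun N => (N / 5)%nat) eventually eventually.
Proof.
  intros P [M HM]. exists (5 * M)%nat. intros n Hn. apply HM.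
  pose proof (Nat.div_mod n 5 ltac:(lia)). pose proof (Nat.mod_upper_bound n 5 ltac:(lia)). lia.
Qed.

Lemma sparse (t : nat -> C) T : is_series t T ->
  is_series (fun n => if Nat.eqb (n mod 5) 0 then t (n / 5)%nat else RtoC 0) T.
Proof.
  unfold is_series. intros H.
  eapply filterlim_ext; [|exact (filterlim_comp _ _ _ _ _ _ _ _ div5_lim H)].
  intros N. cbv beta. induction N.
  - rewrite !sum_O. reflexivity.
  - rewrite sum_Sn, <- IHN.
    pose proof (Nat.div_mod N 5 ltac:(lia)). pose proof (Nat.mod_upper_bound N 5 ltac:(lia)).
    pose proof (Nat.div_mod (S N) 5 ltac:(lia)). pose proof (Nat.mod_upper_bound (S N) 5 ltac:(lia)).
    cbv beta. destruct (Nat.eqb_spec (S N mod 5) 0) as [e|ne].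
    +
      replace (S N / 5)%nat with (S (N / 5)) by lia. rewrite sum_Sn. reflexivity.
    +
      replace (S N / 5)%nat with (N / 5)%nat by lia. unfold plus; simpl. symmetry. apply Cplus_0_r.
Qed.

Lemma iota_series (a : nat -> C) s : is_series a s -> iota (fun l : C_CompleteNormedModule => is_series a l) = s.
Proof.
  intros H. apply (@iota_filterlim_locally C_AbsRing C_CompleteNormedModule nat eventually _ (sum_n a) s). exact H.
Qed.
End AuxC.

Section Main.
Open Scope C_scope.

Definition Q4 : list (C * R) :=
  [(RtoC (1/5), 1%R); (RtoC (2/5), 1%R); (RtoC (3/5), 1%R); (RtoC (4/5), 1%R)].

Lemma RtoC_neq (r : R) : r <> 0%R -> RtoC r <> 0.
Proof. intros H E. apply H. injection E. auto. Qed.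

Lemma term_k ps qs c x k n :
  FW_term ps qs (c * cpow (x * cpow alpha5 k) 2) n =
  FW_term ps qs (c * cpow x 2) n * cpow (cpow alpha5 (2 * n)) k.
Proof.
  unfold FW_term. rewrite !cpow_mul, !cpow_pow.
  replace (k * (2 * n))%nat with (2 * n * k)%nat by lia.
  unfold Cdiv. ring.
Qed.

Lemma sum_terms ps qs c x n :
  sum5 (fun k => FW_term ps qs (c * cpow (x * cpow alpha5 k) 2) n) =
  FW_term ps qs (c * cpow x 2) n * geo (cpow alpha5 (2 * n)).
Proof.
  unfold sum5. cbn [List.seq fold_right]. rewrite !term_k.
  unfold geo. cbn [cpow]. ring.
Qed.

Lemma Q4val m : poch_prod Q4 m =
  RtoC (rp (1/5) m * rp (2/5) m * rp (3/5) m * rp (4/5) m).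
Proof.
  unfold poch_prod, Q4. cbn [fold_right fst snd].
  rewrite !poch_R by lra. rewrite !RtoC_mult. ring.
Qed.

Lemma pointwise ps qs c x n :
  sum5 (fun k => FW_term ps qs (c * cpow (x * cpow alpha5 k) 2) n) =
  if Nat.eqb (n mod 5) 0 then
    RtoC 5 * FW_term (scale5 ps) (Q4 ++ scale5 qs) (cpow (c * cpow x 2 / RtoC 5) 5) (n / 5)%nat
  else RtoC 0.
Proof.
  rewrite sum_terms, geo_val.
  destruct (Nat.eqb_spec (n mod 5) 0) as [e|ne]; [|apply Cmult_0_r].
  assert (En : n = (5 * (n / 5))%nat).
  { pose proof (Nat.div_mod n 5 ltac:(lia)). lia. }
  set (m := (n / 5)%nat) in *. rewrite En. clearbody m. clear En e.
  unfold FW_term, Cdiv. rewrite poch_app, !poch_scale5, Q4val.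
  set (A := poch_prod ps (5 * m)). set (B := poch_prod qs (5 * m)).
  set (w := c * cpow x 2).
  rewrite Cinv_mul_gen.
  2:{ apply RtoC_neq. pose proof (rp_pos (1/5) m). pose proof (rp_pos (2/5) m).
      pose proof (rp_pos (3/5) m). pose proof (rp_pos (4/5) m).
      apply Rgt_not_eq. repeat apply Rmult_lt_0_compat; auto; lra. }
  rewrite cpow_pow, cpow_mul, <- (RtoC_inv 5) by lra.
  rewrite cpow_R, fact5.
  rewrite pow_inv.
  pose proof (rp_pos (1/5) m ltac:(lra)). pose proof (rp_pos (2/5) m ltac:(lra)).
  pose proof (rp_pos (3/5) m ltac:(lra)). pose proof (rp_pos (4/5) m ltac:(lra)).
  pose proof (lt_0_INR _ (lt_O_fact m)).
  assert (0 < 5 ^ (5 * m))%R by (apply pow_lt; lra).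
  rewrite (RtoC_inv (5 ^ (5 * m))) by lra. rewrite !RtoC_mult.
  set (iB := / B).
  field. repeat split; apply RtoC_neq; lra.
Qed.
End Main.

Theorem theorem5 (ps qs : list (C * R)) (c x : C) :
  params_ok ps -> params_ok qs ->
  FW_poch_ok ps qs ->
  FW_poch_ok (scale5 ps)
    ([(RtoC (1/5), 1%R); (RtoC (2/5), 1%R); (RtoC (3/5), 1%R); (RtoC (4/5), 1%R)]
       ++ scale5 qs) ->
  (forall k : nat, (k < 5)%nat ->
     ex_series (FW_term ps qs (c * cpow (x * cpow alpha5 k) 2)%C)) ->
  ex_series (FW_term (scale5 ps)
    ([(RtoC (1/5), 1%R); (RtoC (2/5), 1%R); (RtoC (3/5), 1%R); (RtoC (4/5), 1%R)]
       ++ scale5 qs)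
    (cpow (c * cpow x 2 / RtoC 5) 5)%C) ->
  sum5 (fun k => FoxWright ps qs (c * cpow (x * cpow alpha5 k) 2)%C)
  = (RtoC 5 * FoxWright (scale5 ps)
       ([(RtoC (1/5), 1%R); (RtoC (2/5), 1%R); (RtoC (3/5), 1%R); (RtoC (4/5), 1%R)]
          ++ scale5 qs)
       (cpow (c * cpow x 2 / RtoC 5) 5))%C.
Proof.
  intros _ _ _ _ Hex Hex5.
  destruct Hex5 as [T HT].
  assert (ER : FoxWright (scale5 ps)
       ([(RtoC (1/5), 1%R); (RtoC (2/5), 1%R); (RtoC (3/5), 1%R); (RtoC (4/5), 1%R)]
          ++ scale5 qs)
       (cpow (c * cpow x 2 / RtoC 5) 5) = T).
  { unfold FoxWright. apply iota_series. exact HT. }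
  rewrite ER.
  assert (Hs : forall k, In k (List.seq 0 5) ->
     is_series (FW_term ps qs (c * cpow (x * cpow alpha5 k) 2)%C)
               (FoxWright ps qs (c * cpow (x * cpow alpha5 k) 2)%C)).
  { intros k Hk. apply in_seq in Hk.
    destruct (Hex k ltac:(lia)) as [s Hs]. unfold FoxWright. rewrite (iota_series _ s Hs). exact Hs. }
  pose proof (is_series_sumlist (fun k n => FW_term ps qs (c * cpow (x * cpow alpha5 k) 2)%C n)
      (fun k => FoxWright ps qs (c * cpow (x * cpow alpha5 k) 2)%C) (List.seq 0 5) Hs) as H1.
  pose proof (sparse _ T HT) as H2.
  apply (is_series_scal (RtoC 5)) in H2.
  set (F := fun n => if Nat.eqb (n mod 5) 0 then
              (RtoC 5 * FW_term (scale5 ps) (Q4 ++ scale5 qs) (cpow (c * cpow x 2 / RtoC 5) 5) (n / 5)%nat)%C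
              else RtoC 0).
  assert (E1 : is_series F (sum5 (fun k => FoxWright ps qs (c * cpow (x * cpow alpha5 k) 2)%C))).
  { apply (is_series_ext _ F _) in H1. exact H1.
    intros n. unfold F. rewrite <- pointwise. reflexivity. }
  assert (E2 : is_series F (RtoC 5 * T)%C).
  { apply (is_series_ext _ F _) in H2. exact H2.
    intros n. unfold F. destruct (n mod 5 =? 0). reflexivity. apply Cmult_0_r. }
  unfold is_series in E1, E2.
  exact (filterlim_locally_unique _ _ _ E1 E2).
Qed.
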